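(* Let $\mu,\nu$ be compactly supported Borel probability measures on $\mathbb{R}^n$ and $(q,t)\in\mathbb{R}^2$ such that $B_{\mu,\nu}$ is differentiable at $(q,t)$; set $\alpha=-\frac{\partial B_{\mu,\nu}(q,t)}{\partial q}$ and $\beta=-\frac{\partial B_{\mu,\nu}(q,t)}{\partial t}$. Then for all $\eta_1,\eta_2>0$, $$\mathcal H^{\alpha q+\beta t+B_{\mu,\nu}(q,t)-\eta_1-\eta_2}\big(E_{\mu,\nu}(\alpha,\beta)\big)\ge 2^{\alpha q+\beta t-\eta_1-\eta_2}\,\mathcal H^{q,t,B_{\mu,\nu}(q,t)}_{\mu,\nu}\big(E_{\mu,\nu}(\alpha,\beta)\big).$$
   Context: $\mathcal H^s$ denotes the $s$-dimensional Hausdorff measure. $B(x,r)$ denotes the closed ball of center $x$ and radius $r$; conventions $0^q=\infty$ for $q\le0$, $0^q=0$ for $q>0$. Centered $\delta$-packings (resp. coverings) of $E$ are countable families of pairwise disjoint closed balls (resp. closed balls covering $E$) $B(x_i,r_i)$ with $x_i\in E$, $0<r_i\le\delta$. For $q,t,s\in\mathbb{R}$: $\overline{\mathcal P}^{q,t,s}_{\mu,\nu,\delta}(E)=\sup\sum_i\mu(B(x_i,r_i))^q\nu(B(x_i,r_i))^t(2r_i)^s$ over centered $\delta$-packings, $\overline{\mathcal P}^{q,t,s}_{\mu,\nu}=\inf_{\delta>0}\overline{\mathcal P}^{q,t,s}_{\mu,\nu,\delta}$, $\mathcal P^{q,t,s}_{\mu,\nu}(E)=\inf\{\sum_i\overline{\mathcal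 P}^{q,t,s}_{\mu,\nu}(E_i):E\subseteq\bigcup_iE_i\}$; $\overline{\mathcal H}^{q,t,s}_{\mu,\nu,\delta}(E)$ is the same sum with infimum over centered $\delta$-coverings, $\overline{\mathcal H}^{q,t,s}_{\mu,\nu}=\sup_{\delta>0}\overline{\mathcal H}^{q,t,s}_{\mu,\nu,\delta}$, $\mathcal H^{q,t,s}_{\mu,\nu}(E)=\sup_{F\subseteq E}\overline{\mathcal H}^{q,t,s}_{\mu,\nu}(F)$. $B^{q,t}_{\mu,\nu}(E)$ is the unique value in $[-\infty,\infty]$ where $s\mapsto\mathcal P^{q,t,s}_{\mu,\nu}(E)$ jumps from $\infty$ (smaller $s$) to $0$ (larger $s$), and $B_{\mu,\nu}(q,t)=B^{q,t}_{\mu,\nu}(\operatorname{supp}\mu\cap\operatorname{supp}\nu)$. $E_{\mu,\nu}(\alpha,\beta)=\{x\in\operatorname{supp}\mu\cap\operatorname{supp}\nu:\lim_{r\to0}\frac{\log\mu(B(x,r))}{\log r}=\alpha,\ \lim_{r\to0}\frac{\log\nu(B(x,r))}{\log r}=\beta\}$. *)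

(* Defs.v *)
From HB Require Import structures.
From mathcomp Require Import all_boot all_order all_algebra.
From mathcomp Require Import all_classical all_reals all_analysis.
Set Implicit Arguments. Unset Strict Implicit. Unset Printing Implicit Defensive.
Import Order.TTheory GRing.Theory Num.Theory.
Import numFieldNormedType.Exports.
Local Open Scope classical_set_scope.
Local Open Scope ring_scope.

Section MixedMultifractal.
Variables (R : realType) (n : nat).
Local Notation V := 'rV[R]_n.

Definition edist (x y : V) : R := Num.sqrt (\sum_(i < n) (x ord0 i - y ord0 i) ^+ 2).

Definition cball (x : V) (r : R) : set V := [set y | edist x y <= r].

Definition BorelRn : Type := g_sigma_algebraType (@open V).

Definition supp (mu : set BorelRn -> \bar R) : set V :=
  [set x | forall r : R, 0 < r -> (0 < mu (cball x r))%E].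

Definition epow (a q : R) : \bar R :=
  if a == 0 then (if q <= 0 then +oo%E else 0%E) else (a `^ q)%:E.

Definition mterm (mu nu : set BorelRn -> \bar R) (q t s : R) (b : option (V * R))
  : \bar R :=
  match b with
  | None => 0%E
  | Some (x, r) => (epow (fine (mu (cball x r))) q * epow (fine (nu (cball x r))) t
                     * ((2 * r) `^ s)%:E)%E
  end.

(** Countable families of closed balls are encoded as sequences of optional
    (center, radius) pairs ([None] = no ball), allowing finite/empty families. *)
Definition centered_delta (E : set V) (delta : R) (c : nat -> option (V * R)) :=
  forall i x r, c i = Some (x, r) -> E x /\ 0 < r /\ r <= delta.

Definition is_delta_packing (E : set V) (delta : R) (c : nat -> option (V * R)) :=
  centered_delta E delta c /\
  forall i j x r y u, i <> j -> c i = Some (x, r) -> c j = Some (y, u) ->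
    cball x r `&` cball y u = set0.

Definition is_delta_covering (E : set V) (delta : R) (c : nat -> option (V * R)) :=
  centered_delta E delta c /\
  E `<=` \bigcup_i [set y | exists x r, c i = Some (x, r) /\ cball x r y].

Definition Pbar_delta mu nu q t s (E : set V) (delta : R) : \bar R :=
  ereal_sup [set (\sum_(i <oo) mterm mu nu q t s (c i))%E | c in is_delta_packing E delta].

Definition Pbar mu nu q t s (E : set V) : \bar R :=
  ereal_inf [set Pbar_delta mu nu q t s E delta | delta in [set d : R | 0 < d]].

Definition Pmeas mu nu q t s (E : set V) : \bar R :=
  ereal_inf [set (\sum_(i <oo) Pbar mu nu q t s (F i))%E |
              F in [set F : nat -> set V | E `<=` \bigcup_i F i]].

Definition Hbar_delta mu nu q t s (E : set V) (delta : R) : \bar R :=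
  ereal_inf [set (\sum_(i <oo) mterm mu nu q t s (c i))%E | c in is_delta_covering E delta].

Definition Hbar mu nu q t s (E : set V) : \bar R :=
  ereal_sup [set Hbar_delta mu nu q t s E delta | delta in [set d : R | 0 < d]].

Definition Hmeas mu nu q t s (E : set V) : \bar R :=
  ereal_sup [set Hbar mu nu q t s F | F in [set F | F `<=` E]].

Definition Bqt mu nu q t (E : set V) : \bar R :=
  ereal_inf [set s%:E | s in [set s : R | Pmeas mu nu q t s E = 0%E]].

Definition Bfun mu nu (q t : R) : \bar R := Bqt mu nu q t (supp mu `&` supp nu).

Definition ediam (U : set V) : \bar R :=
  ereal_sup ([set 0%E] `|` [set (edist x y)%:E | x in U & y in U]).

Definition hterm (s : R) (U : set V) : \bar R :=
  if `[< U = set0 >] then 0%E else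
  let d := fine (ediam U) in
  if d == 0 then (if s == 0 then 1%E else if 0 < s then 0%E else +oo%E)
  else (d `^ s)%:E.

Definition Hs_delta (s : R) (E : set V) (delta : R) : \bar R :=
  ereal_inf [set (\sum_(i <oo) hterm s (U i))%E |
    U in [set U : nat -> set V | E `<=` \bigcup_i U i /\
                                  forall i, (ediam (U i) <= delta%:E)%E]].

(** s-dimensional Hausdorff measure H^s (no normalising constant). *)
Definition Hausdorff (s : R) (E : set V) : \bar R :=
  ereal_sup [set Hs_delta s E delta | delta in [set d : R | 0 < d]].

Definition Elevel (mu nu : set BorelRn -> \bar R) (a b : R) : set V :=
  [set x | (supp mu `&` supp nu) x /\
     (fun r => ln (fine (mu (cball x r))) / ln r) @ 0^'+ --> a /\
     (fun r => ln (fine (nu (cball x r))) / ln r) @ 0^'+ --> b].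

End MixedMultifractal.

(* Main.v *)
Require Import Defs.
From HB Require Import structures.
From mathcomp Require Import all_boot all_order all_algebra.
From mathcomp Require Import all_classical all_reals all_analysis.
From mathcomp Require Import ring lra.
Import Order.TTheory GRing.Theory Num.Theory.
Import numFieldNormedType.Exports.
Local Open Scope classical_set_scope.
Local Open Scope ring_scope.



Section Helpers.
Variables (R : realType) (n : nat).
Local Notation V := 'rV[R]_n.

Lemma edist_cont (x : V) : continuous (fun y : V => Defs.edist x y).
Proof.
have H i : continuous (fun z : V => (x ord0 i - z ord0 i)^+2).
  have -> : (fun w : V => (x ord0 i - w ord0 i)^+2) =
    (fun w => (x ord0 i - w ord0 i) * (x ord0 i - w ord0 i)).
    by apply/funext=> w; rewrite expr2.
  move=> z; have h := @coord_continuous R 1 n ord0 i z.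
  have h2 : (fun w : V => x ord0 i - w ord0 i) @ z --> (x ord0 i - z ord0 i).
    by have := cvgB (cvg_cst (x ord0 i)) h; apply; exact: nbhs_filter.
  exact: (cvgM h2 h2).
move=> y; rewrite /Defs.edist.
apply: continuous_comp; last exact: sqrt_continuous.
have := @cvg_big _ _ +%R 0 xpredT add_continuous _ (nbhs y) (index_enum 'I_n)
  (fun i (w : V) => (x ord0 i - w ord0 i)^+2) (fun i => (x ord0 i - y ord0 i)^+2).
apply; move=> i _; exact: H.
Qed.

Lemma cball_closed (x : V) r : closed (cball x r).
Proof.
rewrite /cball.
have -> : [set y | Defs.edist x y <= r] = (fun y => Defs.edist x y) @^-1` [set z | z <= r] by [].
by apply: (proj1 (continuous_closedP _) (@edist_cont x)); exact: closed_le.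
Qed.

Lemma cball_meas (x : V) r : measurable (cball x r : set (BorelRn R n)).
Proof.
rewrite -[cball x r]setCK; apply: measurableC.
apply: sub_sigma_algebra.
exact: (closed_openC (cball_closed x r)).
Qed.
End Helpers.

Set Implicit Arguments. Unset Strict Implicit.



Section Local.
Variables (R : realType) (n : nat).
Local Notation V := 'rV[R]_n.

Lemma fine_ball_gt0 (mu : probability (BorelRn R n) R) (x : V) r :
  supp mu x -> 0 < r -> 0 < fine (mu (cball x r)).
Proof.
move=> sx r0; apply: fine_gt0; apply/andP; split; first exact: sx.
have h := probability_le1 mu (@cball_meas R n x r).
exact: (le_lt_trans h (ltry _)).
Qed.

Lemma local_est (mu nu : probability (BorelRn R n) R) (q t s a b g : R) (x : V) :
  Elevel mu nu a b x -> g < a * q + b * t ->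
  exists2 rho, 0 < rho & forall r, 0 < r -> r <= rho ->
    (mterm mu nu q t s (Some (x, r)) <= (r `^ g * (2 * r) `^ s)%:E)%E.
Proof.
move=> [[smu snu] [cA cB]] gl.
set fA := (fun r => ln (fine (mu (cball x r))) / ln r) in cA.
set fB := (fun r => ln (fine (nu (cball x r))) / ln r) in cB.
have cf : (fun r => q * fA r + t * fB r) @ 0^'+ --> a * q + b * t.
  rewrite (mulrC a) (mulrC b).
  apply: cvgD; [exact: cvgMr cA | exact: cvgMr cB].
have H : \forall r \near 0^'+, g < q * fA r + t * fB r /\ r < 1.
  near=> r; split; last by near: r; exact: nbhs_right_lt.
  by near: r; apply: (cvgr_gt _ cf _ gl).
move: H; rewrite near_withinE => /nbhs_ballP [e /= e0 He].
exists (e / 2); first by rewrite divr_gt0.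
move=> r r0 re.
have [gf r1] : g < q * fA r + t * fB r /\ r < 1.
  apply: He => //; rewrite /ball /= sub0r normrN gtr0_norm //.
  by apply: (le_lt_trans re); rewrite ltr_pdivrMr // ltr_pMr // ltr1n.
rewrite /mterm.
set A := fine (mu (cball x r)).
set B := fine (nu (cball x r)).
have A0 : 0 < A by exact: fine_ball_gt0.
have B0 : 0 < B by exact: fine_ball_gt0.
rewrite /epow (gt_eqF A0) (gt_eqF B0) -!EFinM lee_fin.
apply: ler_wpM2r; first exact: powR_ge0.
have L0 : ln r < 0 by apply: ln_lt0; rewrite r0 r1.
rewrite -ler_ln ?posrE; [|by rewrite mulr_gt0 // powR_gt0|by rewrite powR_gt0].
rewrite lnM ?posrE ?powR_gt0 // !ln_powR.
have E : q * fA r + t * fB r = (q * ln A + t * ln B) / ln r.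
  by rewrite mulrDl !mulrA.
move: gf; rewrite E ltr_ndivlMr // => h.
exact: ltW h.
Unshelve. all: by end_near. Qed.
End Local.



Section Basic.
Variables (R : realType) (n : nat).
Local Notation V := 'rV[R]_n.

Lemma epow_ge0 (a q : R) : (0 <= epow a q)%E.
Proof.
rewrite /epow; case: ifP => _; last by rewrite lee_fin powR_ge0.
by case: ifP.
Qed.

Lemma mterm_ge0 (mu nu : set (BorelRn R n) -> \bar R) q t s c :
  (0 <= mterm mu nu q t s c)%E.
Proof.
case: c => [[x r]|] //=.
by rewrite !mule_ge0 ?epow_ge0 // lee_fin powR_ge0.
Qed.

Lemma ediam_ge0 (U : set V) : (0 <= ediam U)%E.
Proof. by apply: ereal_sup_ubound; left. Qed.

Lemma edist_le_ediam (U : set V) x y : U x -> U y ->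
  ((Defs.edist x y)%:E <= ediam U)%E.
Proof.
move=> Ux Uy; apply: ereal_sup_ubound; right.
by exists x => //; exists y.
Qed.

Lemma hterm_ge0 s (U : set V) : (0 <= hterm s U)%E.
Proof.
rewrite /hterm; case: ifP => // _.
case: ifP => _; last by rewrite lee_fin powR_ge0.
case: ifP => // _; case: ifP => //.
Qed.

Lemma Hs_delta_ge0 s (E : set V) d : (0 <= Hs_delta s E d)%E.
Proof.
apply: le_ereal_inf_tmp => _ [U _ <-].
by apply: nneseries_ge0 => i _ _; exact: hterm_ge0.
Qed.

Lemma Hausdorff_ge0 s (E : set V) : (0 <= Hausdorff s E)%E.
Proof.
apply: (le_trans (Hs_delta_ge0 s E 1)).
by apply: ereal_sup_ubound; exists 1 => //=; exact: ltr01.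
Qed.

Lemma Hs_delta_le s (E : set V) d : 0 < d -> (Hs_delta s E d <= Hausdorff s E)%E.
Proof. by move=> d0; apply: ereal_sup_ubound; exists d. Qed.

End Basic.



Section Cover.
Variables (R : realType) (n : nat).
Local Notation V := 'rV[R]_n.

Lemma pow_small (K p e : R) : 0 < K -> 0 < p -> 0 < e ->
  forall r, 0 <= r -> r <= (e / K) `^ p^-1 -> K * r `^ p <= e.
Proof.
move=> K0 p0 e0 r r0 rle.
have ek : 0 < e / K by rewrite divr_gt0.
have : r `^ p <= ((e / K) `^ p^-1) `^ p.
  by apply: ge0_ler_powR => //; rewrite ?nnegrE ?powR_ge0 ?ltW.
rewrite -powRrM mulVf ?gt_eqF // powRr1; last exact: ltW.
move=> h; rewrite -(ler_pM2l K0) in h.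
by apply: (le_trans h); rewrite mulrC divfK ?gt_eqF.
Qed.

Lemma cover_one (mu nu : set (BorelRn R n) -> \bar R) q t s (s' p K rho delta' : R)
   (G : set V) (U : set V) (e : R) :
  0 < K -> s' < p -> 0 < rho -> 0 < delta' -> delta' <= rho -> 0 < e ->
  (forall x r, G x -> 0 < r -> r <= rho ->
     (mterm mu nu q t s (Some (x, r)) <= (K * r `^ p)%:E)%E) ->
  (ediam U <= delta'%:E)%E ->
  exists ci : option (V * R),
    (forall x r, ci = Some (x, r) -> G x /\ 0 < r /\ r <= delta') /\
    (forall y, U y -> G y -> exists x r, ci = Some (x, r) /\ cball x r y) /\
    (mterm mu nu q t s ci <=
       (K * delta' `^ (p - s'))%:E * hterm s' U + e%:E)%E.
Proof.
move=> K0 sp rho0 d0 drho e0 hG hdiam.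
have A0 : (0 <= (K * delta' `^ (p - s'))%:E * hterm s' U)%E.
  by rewrite mule_ge0 ?hterm_ge0 // lee_fin mulr_ge0 ?powR_ge0 // ltW.
case: (pselect (exists x, U x /\ G x)) => [[x [Ux Gx]] | nox]; last first.
  exists None; split=> //; split.
    by move=> y Uy Gy; exfalso; apply: nox; exists y.
  by rewrite /=; apply: adde_ge0 => //; rewrite lee_fin ltW.
set d := fine (ediam U).
have dfin : ediam U \is a fin_num.
  by rewrite ge0_fin_numE ?ediam_ge0 //; apply: (le_lt_trans hdiam); exact: ltry.
have dE : ediam U = d%:E by rewrite /d fineK.
have dge0 : 0 <= d by rewrite -lee_fin -dE ediam_ge0.
have dled : d <= delta' by rewrite -lee_fin -dE.
have hxy y : U y -> Defs.edist x y <= d.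
  by move=> Uy; rewrite -lee_fin -dE; exact: edist_le_ediam.
have hU : U <> set0 by move=> U0; rewrite U0 in Ux.
have hT : hterm s' U = if d == 0 then (if s' == 0 then 1%E else if 0 < s' then 0%E else +oo%E)
                        else (d `^ s')%:E.
  by rewrite /hterm asboolF.
case: (ltP 0 d) => dpos.
  exists (Some (x, d)); split.
    by move=> x0 r0 [<- <-]; split => //; split.
  split.
    by move=> y Uy Gy; exists x, d; split => //; exact: hxy.
  apply: (le_trans (hG x d Gx dpos (le_trans dled drho))).
  rewrite hT gt_eqF // -EFinM.
  apply: (le_trans _ (leeDl _ _)); last by rewrite lee_fin ltW.
  rewrite lee_fin -mulrA ler_pM2l //.
  have -> : p = (p - s') + s' by rewrite subrK.
  rewrite powRD; last by rewrite (gt_eqF dpos) implybT.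
  rewrite addrK; apply: ler_wpM2r; first exact: powR_ge0.
  by apply: ge0_ler_powR => //; rewrite ?nnegrE ?subr_ge0 ltW.
have d00 : d = 0 by apply/eqP; rewrite eq_le dpos dge0.
set r := Num.min delta' ((e / K) `^ p^-1).
have r0 : 0 < r by rewrite lt_min d0 powR_gt0 // divr_gt0.
have rd : r <= delta' by rewrite ge_min lexx.
exists (Some (x, r)); split.
  by move=> x0 r1 [<- <-]; split => //; split.
split.
  by move=> y Uy Gy; exists x, r; split => //; rewrite /cball /=;
     apply: (le_trans (hxy y Uy)); rewrite d00 ltW.
case: (ltP s' 0) => s0.
  have sF : (0 < s') = false by apply/negbTE; rewrite -leNgt ltW.
  rewrite hT d00 eqxx (lt_eqF s0) sF mulry gtr0_sg ?mul1e.
    by rewrite addye // leey.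
  by rewrite mulr_gt0 // powR_gt0.
have p0 : 0 < p by apply: le_lt_trans sp.
apply: (le_trans (hG x r Gx r0 (le_trans rd drho))).
apply: (le_trans _ (leeDr _ A0)).
rewrite lee_fin; apply: pow_small => //; first exact: ltW.
by rewrite ge_min lexx orbT.
Qed.

Lemma cover_small (mu nu : set (BorelRn R n) -> \bar R) q t s (s' p K rho : R)
   (E G : set V) (M : R) :
  0 < K -> s' < p -> 0 < rho -> G `<=` E ->
  (forall x r, G x -> 0 < r -> r <= rho ->
     (mterm mu nu q t s (Some (x, r)) <= (K * r `^ p)%:E)%E) ->
  Hausdorff s' E = M%:E ->
  forall delta eps, 0 < delta -> 0 < eps ->
  exists c, is_delta_covering G delta c /\
    (\sum_(i <oo) mterm mu nu q t s (c i) <= eps%:E)%E.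
Proof.
move=> K0 sp rho0 GE hG HM delta eps del0 eps0.
have M0 : 0 <= M by rewrite -lee_fin -HM Hausdorff_ge0.
set th := p - s'.
have th0 : 0 < th by rewrite subr_gt0.
set eta := eps / (2 * (M + 1)).
have eta0 : 0 < eta by rewrite divr_gt0 // !mulr_gt0 // ltr_wpDl.
set d' := Num.min delta (Num.min rho ((eta / K) `^ th^-1)).
have d'0 : 0 < d' by rewrite !lt_min del0 rho0 powR_gt0 // divr_gt0.
have d'del : d' <= delta by rewrite /d' ge_min lexx.
have d'rho : d' <= rho by rewrite /d' !ge_min lexx orbT.
have hd : K * d' `^ th * (M + 1) <= eps / 2.
  have h1 : K * d' `^ th <= eta.
    apply: pow_small => //; first exact: ltW.
    by rewrite /d' !ge_min lexx !orbT.
  apply: (le_trans (ler_wpM2r _ h1)); first by rewrite ltW // ltr_wpDl.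
  rewrite /eta le_eqVlt; apply/orP; left; apply/eqP; field.
  by rewrite gt_eqF // ltr_wpDl.
have : (Hs_delta s' E d' < (M + 1)%:E)%E.
  by apply: (le_lt_trans (Hs_delta_le s' E d'0)); rewrite HM lte_fin ltrDl.
case/ereal_inf_lt => _ [U [UE Ud] <-] hsum.
have hc : forall i, exists ci : option (V * R),
    (forall x r, ci = Some (x, r) -> G x /\ 0 < r /\ r <= d') /\
    (forall y, U i y -> G y -> exists x r, ci = Some (x, r) /\ cball x r y) /\
    (mterm mu nu q t s ci <=
       (K * d' `^ (p - s'))%:E * hterm s' (U i) + ((eps / 2) / (2 ^ i.+1)%:R)%:E)%E.
  move=> i; apply: (@cover_one mu nu q t s s' p K rho d' G (U i)) => //.
  by rewrite !divr_gt0 // ltr0n expn_gt0.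
have [c hcP] := choice hc.
exists c; split.
  split.
    move=> i x r ci; have [h1 _] := hcP i; have [Gx [r0 rd]] := h1 x r ci.
    by split => //; split => //; exact: (le_trans rd d'del).
  move=> y Gy; have [i _ Uy] := UE y (GE y Gy).
  have [_ [h2 _]] := hcP i.
  by exists i => //; exact: h2.
apply: (le_trans (lee_nneseries (v := fun i =>
   ((K * d' `^ (p - s'))%:E * hterm s' (U i) + ((eps / 2) / (2 ^ i.+1)%:R)%:E)%E) _ _)).
- by move=> i _ _; exact: mterm_ge0.
- by move=> i _; have [_ [_ h3]] := hcP i.
apply: (le_trans (epsilon_trick _ _ _)).
- by move=> i; rewrite mule_ge0 ?hterm_ge0 // lee_fin mulr_ge0 ?powR_ge0 // ltW.
- by rewrite divr_ge0 // ltW.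
rewrite nneseriesZl; last by move=> i _; exact: hterm_ge0.
apply: (@le_trans _ _ ((eps / 2)%:E + (eps / 2)%:E)%E); last first.
  by rewrite -EFinD lee_fin; lra.
rewrite leeD2r //.
apply: (@le_trans _ _ ((K * d' `^ (p - s'))%:E * (M + 1)%:E)%E).
  apply: lee_pmul => //.
  - by rewrite lee_fin mulr_ge0 ?powR_ge0 // ltW.
  - by apply: nneseries_ge0 => i _ _; exact: hterm_ge0.
  - exact: ltW.
by rewrite -EFinM lee_fin.
Qed.

End Cover.



Lemma double_sum (R : realType) (h : nat -> nat -> \bar R) (f : nat -> nat * nat) :
  (forall i j, (0 <= h i j)%E) -> set_bij setT setT f ->
  (\sum_(m <oo) h (f m).1 (f m).2 = \sum_(i <oo) \sum_(j <oo) h i j)%E.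
Proof.
move=> h0 fb.
rewrite nneseries_esumT; last by move=> m; exact: h0.
rewrite -(@reindex_esum R _ _ setT setT f (fun z => h z.1 z.2) fb).
rewrite nneseries_esumT; last by move=> i; apply: nneseries_ge0 => j _ _.
have -> : (\esum_(i in [set: nat]) \sum_(j <oo) h i j =
          \esum_(i in [set: nat]) \esum_(j in [set: nat]) h i j)%E.
  by apply: eq_esum => i _; rewrite nneseries_esumT.
rewrite esum_esum //.
congr esum; apply/seteqP; split => // -[a b] _ //.
Qed.

Lemma nat_bij : exists f : nat -> nat * nat, set_bij setT setT f.
Proof.
have /card_esym/ppcard_eqP[f] := card_nat2.
by exists f; exact: bij.
Qed.

Section Zero.
Variables (R : realType) (n : nat).
Local Notation V := 'rV[R]_n.

Lemma hbar_delta_zero (mu nu : set (BorelRn R n) -> \bar R) q t s (s' p K : R)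
   (E F : set V) (M : R) :
  0 < K -> s' < p -> F `<=` E -> Hausdorff s' E = M%:E ->
  (forall x, F x -> exists2 rho, 0 < rho & forall r, 0 < r -> r <= rho ->
      (mterm mu nu q t s (Some (x, r)) <= (K * r `^ p)%:E)%E) ->
  forall delta, 0 < delta -> Hbar_delta mu nu q t s F delta = 0%E.
Proof.
move=> K0 sp FE HM hloc delta del0.
apply/eqP; rewrite eq_le; apply/andP; split; last first.
  apply: le_ereal_inf_tmp => _ [c _ <-].
  by apply: nneseries_ge0 => i _ _; exact: mterm_ge0.
apply/lee_addgt0Pr => eps eps0; rewrite add0e.
pose G k := [set x | F x /\ forall r, 0 < r -> r <= (k.+1%:R)^-1 ->
      (mterm mu nu q t s (Some (x, r)) <= (K * r `^ p)%:E)%E].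
have hk : forall k, exists c, is_delta_covering (G k) delta c /\
    (\sum_(i <oo) mterm mu nu q t s (c i) <= (eps / (2 ^ k.+1)%:R)%:E)%E.
  move=> k.
  apply: (@cover_small R n mu nu q t s s' p K (k.+1%:R)^-1 E (G k) M) => //.
  all: try by rewrite invr_gt0 ltr0n.
  all: try by move=> x [Fx _]; exact: FE.
  all: try by move=> x r [_ h]; exact: h.
  all: try by rewrite divr_gt0 // ltr0n expn_gt0.
have [cc hcc] := choice hk.
have [f fb] := nat_bij.
pose c := fun m => cc (f m).1 (f m).2.
apply: (@le_trans _ _ (\sum_(m <oo) mterm mu nu q t s (c m))%E).
  apply: ereal_inf_lbound; exists c => //; split.
    move=> m x r cm; have [[hcen _] _] := hcc (f m).1.
    have [[Fx _] hr] := hcen (f m).2 x r cm.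
    by split.
  move=> y Fy; have [rho rho0 hr] := hloc y Fy.
  set k := Num.Def.trunc (rho^-1).
  have kr : (k.+1%:R)^-1 <= rho.
    rewrite -(invrK rho) lef_pV2 ?posrE ?ltr0n ?invr_gt0 //.
    exact: ltW (truncnS_gt _).
  have Gy : G k y.
    by split => // r r0 rk; apply: hr => //; exact: le_trans kr.
  have [[_ hcov] _] := hcc k.
  have [j _ [x [r [ckj yin]]]] := hcov y Gy.
  have [m _ fm] := set_bij_surj fb (t:=(k, j)) I.
  exists m => //; exists x, r; split => //.
  by rewrite /c fm.
rewrite /c (@double_sum R (fun i j => mterm mu nu q t s (cc i j)) f) //; last first.
  by move=> i j; exact: mterm_ge0.
apply: (le_trans (lee_nneseries (v := fun k => (eps / (2 ^ k.+1)%:R)%:E) _ _)).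
- by move=> i _ _; apply: nneseries_ge0 => j _ _; exact: mterm_ge0.
- by move=> k _; have [_ h] := hcc k.
exact: epsilon_trick0 (ltW eps0).
Qed.

End Zero.

Unset Implicit Arguments. Set Strict Implicit.


Theorem mainTheorem7 (R : realType) (n : nat)
  (mu nu : probability (BorelRn R n) R) (q t : R) :
  compact (supp mu) -> compact (supp nu) ->
  (\forall p \near (q, t), Bfun mu nu p.1 p.2 \is a fin_num) ->
  differentiable (fun p : R * R => fine (Bfun mu nu p.1 p.2)) (q, t) ->
  let B := fun p : R * R => fine (Bfun mu nu p.1 p.2) in
  let alpha := - ('D_(1, 0) B (q, t)) in
  let beta := - ('D_(0, 1) B (q, t)) in
  forall eta1 eta2 : R, 0 < eta1 -> 0 < eta2 ->
  (Hausdorff (alpha * q + beta * t + B (q, t) - eta1 - eta2)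
      (Elevel mu nu alpha beta)
   >= (2 `^ (alpha * q + beta * t - eta1 - eta2))%:E
      * Hmeas mu nu q t (B (q, t)) (Elevel mu nu alpha beta))%E.
Proof.
move=> _ _ _ _ B alpha beta eta1 eta2 e1 e2.
clearbody alpha beta B.
set s := B (q, t).
set s' := alpha * q + beta * t + s - eta1 - eta2.
set E := Elevel mu nu alpha beta.
have H0 := Hausdorff_ge0 s' E.
case HM : (Hausdorff s' E) => [M| |]; last by rewrite HM in H0.
  2: exact: leey.
set p := s' + (eta1 + eta2) / 2.
have sp : s' < p by rewrite /p ltrDl divr_gt0 // addr_gt0.
set g := p - s.
have gl : g < alpha * q + beta * t.
  rewrite /g /p /s'.
  have -> : alpha * q + beta * t + s - eta1 - eta2 + (eta1 + eta2) / 2 - s =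
     alpha * q + beta * t - (eta1 + eta2) / 2 by field.
  by rewrite ltrBlDr ltrDl divr_gt0 // addr_gt0.
have K0 : 0 < 2 `^ s by apply: powR_gt0.
have Hz : (Hmeas mu nu q t s E <= 0)%E.
  apply: ge_ereal_sup => _ [F FE <-].
  apply: ge_ereal_sup => _ [d d0 <-].
  rewrite (@hbar_delta_zero R n mu nu q t s s' p (2 `^ s) E F M) //.
  move=> x Fx.
  have [rho rho0 hr] := local_est s (FE x Fx) gl.
  exists rho => // r r0 rr.
  apply: (le_trans (hr r r0 rr)); rewrite lee_fin.
  rewrite powRM; last 2 first.
    - by rewrite ler0n.
    - exact: ltW.
  rewrite mulrCA mulrC -powRD; last by rewrite (gt_eqF r0) implybT.
  by rewrite /g subrK mulrC.
apply: (le_trans (mule_ge0_le0 _ Hz)); first by rewrite lee_fin powR_ge0.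
by rewrite lee_fin -lee_fin -HM.
Qed.
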